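(* Let $n\ge1$ and let $\mathfrak{h}$ be the complex vector space with basis $\{\beta^1,\dots,\beta^n,\alpha^1,\dots,\alpha^n\}$ and symmetric bilinear form with $(\beta^i,\beta^j)=\delta_{ij}$, $(\alpha^i,\alpha^j)=\delta_{ij}$, $(\beta^i,\alpha^j)=0$. Let $M(1)$ be the Heisenberg vertex operator algebra associated with $\mathfrak{h}$, and identify the commutative associative algebra $M(1)/C_2(M(1))$ with $\mathbb{C}[\zeta_1,\dots,\zeta_n,x_1,\dots,x_n]$ via $\alpha^i(-1)\mathbf{1}+C_2(M(1))\mapsto\zeta_i$, $\beta^i(-1)\mathbf{1}+C_2(M(1))\mapsto x_i$. For $i\in\{1,\dots,n\}$ define the linear map $f_i:M(1)\to M(1)$, $f_i(a)=\beta^i(1)a-\alpha^i(-1)a$. Then for $1\le k\le n$, the subspace $\sum_{i=1}^{k}f_i(M(1))+C_2(M(1))$ is an $MZ_{0,-1}$-subspace of $M(1)$ if and only if $\sum_{i=1}^{k}(\partial_{x_i}-\zeta_i)\mathbb{C}[\zeta_1,\dots,\zeta_n,x_1,\dots,x_n]$ is a Mathieu-Zhao subspace of $\mathbb{C}[\zeta_1,\dots,\zeta_n,x_1,\dots,x_n]$.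
   Context: Heisenberg VOA: for $\mathfrak{h}$ with nondegenerate symmetric form, $\hat{\mathfrak{h}}=\mathfrak{h}\otimes\mathbb{C}[t,t^{-1}]\oplus\mathbb{C}c$ with $[x\otimes t^m,y\otimes t^{p}]=(x,y)m\delta_{m+p,0}c$, $c$ central; $M(1)=U(\hat{\mathfrak{h}})\otimes_{U(\mathfrak{h}\otimes\mathbb{C}[t]\oplus\mathbb{C}c)}\mathbb{C}$ ($\mathfrak{h}\otimes\mathbb{C}[t]$ acting by $0$, $c$ by $1$), $\alpha(m)$ denotes the action of $\alpha\otimes t^m$, and $Y(\alpha(-1)\mathbf{1},z)=\sum_m\alpha(m)z^{-m-1}$, with vertex operators of general elements given by normal-ordered products; vacuum $\mathbf{1}=1\otimes1$. In particular $(\alpha(-1)\mathbf{1})_m=\alpha(m)$. $C_2(V)=\operatorname{span}\{u_{-2}v\}$, and $V/C_2(V)$ is a commutative associative algebra with product $(a+C_2)(b+C_2)=a_{-1}b+C_2$. Iterated products are nested to the right. For a subspace $M\subseteq V$ of a vertex algebra: $r_{0,-1}(M)$ is the set of $v$ for which there is $m\ge 0$ with $v_{n_1}\cdots v_{n_t}v\in M$ for all $t\ge m$, $n_i\in\{0,-1\}$; $lsr_{0,-1}(M)$ is the set of $v$ such that for every $b\in V$ there is $m\ge0$ with $b_sv_{n_1}\cdots v_{n_t}v\in M$ for all $t\ge m$, $s,n_i\in\{0,-1\}$; $rsr_{0,-1}(M)$ is the set of $v$ such that for every $w\in V$ there is $m\ge0$ with $(v_{n_1}\cdots v_{n_t}v)_sw\in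 M$ for all $t\ge m$, $s,n_i\in\{0,-1\}$; $sr_{0,-1}=lsr_{0,-1}\cap rsr_{0,-1}$; $M$ is an $MZ_{0,-1}$-subspace if $r_{0,-1}(M)=sr_{0,-1}(M)$. For a commutative associative unital algebra $A$ and a subspace $U$: $r(U)=\{a:\exists m\ge1,\ a^t\in U\ \forall t\ge m\}$, $sr(U)=\{a:\forall b,c\in A\ \exists m\ge1,\ ba^tc\in U\ \forall t\ge m\}$; $U$ is Mathieu-Zhao if $r(U)=sr(U)$. *)

(* Defs.v *)
(* Complex numbers are [R[i]] for an arbitrary
   [R : realType] (every realType is a model of the real numbers). *)
From HB Require Import structures.
From mathcomp Require Import all_boot all_algebra finmap.
From mathcomp Require Import reals.
From mathcomp.real_closed Require Import complex.
From mathcomp.multinomials Require Import monalg.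

Set Implicit Arguments.
Unset Strict Implicit.
Unset Printing Implicit Defensive.

Import GRing.Theory.
Local Open Scope ring_scope.

Notation Pol R I := {malg (complex R)[{cmonom I}]}.

Definition pvar (R : realType) (I : choiceType) (x : I) : Pol R I :=
  << ucm x >>.

Definition pderiv (R : realType) (I : choiceType) (x : I) (g : Pol R I)
  : Pol R I :=
  \sum_(mu <- msupp g) (g@_mu * (mu x)%:R) *: << divcm mu (ucm x) >>.

(* A basis vector of h is indexed by (c, i) : bool * 'I_n, where c = false   *)
(* means beta^(i+1) and c = true means alpha^(i+1).                          *)
(* M(1) = S(h (x) t^-1 C[t^-1]) is the polynomial ring in the variables      *)
(*   (c, i, p) : bool * 'I_n * nat   standing for  e_(c,i)(-p-1),            *)
(* the vacuum being the constant polynomial 1.                               *)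

Definition hidx (n : nat) := (bool * 'I_n)%type.
Definition Hvar (n : nat) := (bool * 'I_n * nat)%type.
Notation M1 R n := (Pol R (Hvar n)).

(* The action of e_a(r), a a basis vector of h, r : int, on M(1):
     r = -(p+1) < 0 : multiplication by the variable (a, p);
     r = 0          : 0;
     r = p+1 > 0    : (p+1) * d/d(a,p)   (since [a(r), a(-r)] = r (a,a) = r). *)
Definition amode (R : realType) (n : nat) (a : hidx n) (r : int)
  (v : M1 R n) : M1 R n :=
  match r with
  | Posz 0 => 0
  | Posz p.+1 => (p.+1)%:R *: pderiv (a, p) v
  | Negz p => pvar R (a, p) * v
  end.

(* conformal weight: the variable (a, p) has weight p+1 *)
Definition mwt (n : nat) (mu : {cmonom (Hvar n)}) : nat :=
  (\sum_(x <- finsupp mu) mu x * (x.2).+1)%N.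

Definition wtbound (R : realType) (n : nat) (v : M1 R n) : nat :=
  (\max_(mu <- msupp v) mwt mu)%N.

(* Vertex operators.  Y(1, z) = id, and for a monomial u = a(-k) w           *)
(* (k >= 1) the vertex operator is the normal ordered product               *)
(*   Y(a(-k)w, z) = : (d/dz)^(k-1)/(k-1)! a(z)  Y(w, z) :,                   *)
(* whose modes are                                                           *)
(*   (a(-k)w)_m v = sum_(i>=0) C(k+i-1, i) [ a(-k-i) (w_(m+i) v)             *)
(*                                  - (-1)^k w_(m-k-i) (a(i) v) ].           *)
(* Only finitely many terms are nonzero (all terms with                      *)
(* i > wt u + wt v + |m| vanish for weight reasons), so the sum is truncated.*)
(* [ymono f mu m v] is the m-th mode of the monomial mu applied to v, with   *)
(* fuel f = degree of mu.                                                    *)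

Fixpoint ymono (R : realType) (n : nat) (fuel : nat) (mu : {cmonom (Hvar n)})
  (m : int) (v : M1 R n) {struct fuel} : M1 R n :=
  match fuel with
  | 0 => if m == -1 then v else 0
  | f.+1 =>
    match (finsupp mu : seq (Hvar n)) with
    | [::] => if m == -1 then v else 0
    | x :: _ =>
      let w := divcm mu (ucm x) in
      let a := x.1 in
      let k := (x.2).+1 in
      \sum_(i < (mwt mu + wtbound v + `|m|%N).+1)
        ('C(k + i - 1, i))%:R *:
          ( amode a (- (k + i)%:Z) (ymono f w (m + i%:Z) v)
            - (-1) ^+ k *: ymono f w (m - k%:Z - i%:Z) (amode a i%:Z v) )
    end
  end.

Definition Ymode (R : realType) (n : nat) (u : M1 R n) (m : int) (v : M1 R n)
  : M1 R n :=
  \sum_(mu <- msupp u) u@_mu *: ymono (mdeg mu) mu m v.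

Definition inC2 (R : realType) (n : nat) (v : M1 R n) : Prop :=
  exists s : seq (M1 R n * M1 R n), v = \sum_(p <- s) Ymode p.1 (-2) p.2.

Definition fmap (R : realType) (n : nat) (i : 'I_n) (a : M1 R n) : M1 R n :=
  amode (false, i) 1 a - amode (true, i) (-1) a.

Definition Msub (R : realType) (n k : nat) (v : M1 R n) : Prop :=
  exists (a : 'I_n -> M1 R n) (c : M1 R n),
    inC2 c /\ v = \sum_(i < n | (i < k)%N) fmap i (a i) + c.

(* An index n_j in {0,-1} is encoded by a boolean: true = 0, false = -1.     *)

Definition sel01 (b : bool) : int := if b then 0 else -1.

Definition iterY (R : realType) (n : nat) (v : M1 R n) (ns : seq bool)
  : M1 R n :=
  foldr (fun b acc => Ymode v (sel01 b) acc) v ns.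

Definition r01 (R : realType) (n : nat) (M : M1 R n -> Prop) (v : M1 R n)
  : Prop :=
  exists m : nat, forall ns : seq bool, (m <= size ns)%N -> M (iterY v ns).

Definition lsr01 (R : realType) (n : nat) (M : M1 R n -> Prop) (v : M1 R n)
  : Prop :=
  forall b : M1 R n, exists m : nat, forall (ns : seq bool) (s : bool),
    (m <= size ns)%N -> M (Ymode b (sel01 s) (iterY v ns)).

Definition rsr01 (R : realType) (n : nat) (M : M1 R n -> Prop) (v : M1 R n)
  : Prop :=
  forall w : M1 R n, exists m : nat, forall (ns : seq bool) (s : bool),
    (m <= size ns)%N -> M (Ymode (iterY v ns) (sel01 s) w).

Definition sr01 (R : realType) (n : nat) (M : M1 R n -> Prop) (v : M1 R n)
  : Prop := lsr01 M v /\ rsr01 M v.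

Definition MZ01_subspace (R : realType) (n : nat) (M : M1 R n -> Prop) : Prop :=
  forall v, r01 M v <-> sr01 M v.

(* The polynomial side: C[zeta_1..zeta_n, x_1..x_n] with variables           *)
(* (false, i) = x_(i+1) and (true, i) = zeta_(i+1).                          *)

Notation Apol R n := (Pol R (hidx n)).

Definition Usub (R : realType) (n k : nat) (p : Apol R n) : Prop :=
  exists g : 'I_n -> Apol R n,
    p = \sum_(i < n | (i < k)%N)
          (pderiv (false, i) (g i) - pvar R (true, i) * g i).

Definition rad (A : comNzRingType) (U : A -> Prop) (a : A) : Prop :=
  exists m : nat, (1 <= m)%N /\ forall t : nat, (m <= t)%N -> U (a ^+ t).

Definition srad (A : comNzRingType) (U : A -> Prop) (a : A) : Prop :=
  forall b c : A, exists m : nat, (1 <= m)%N /\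
    forall t : nat, (m <= t)%N -> U (b * a ^+ t * c).

Definition MathieuZhao (A : comNzRingType) (U : A -> Prop) : Prop :=
  forall a, rad U a <-> srad U a.

(* Main.v *)
Require Import Defs.
From HB Require Import structures.
From mathcomp Require Import all_boot all_algebra finmap.
From mathcomp Require Import reals.
From mathcomp.real_closed Require Import complex.
From mathcomp.multinomials Require Import monalg.
From mathcomp Require Import zify.
Set Implicit Arguments. Unset Strict Implicit. Unset Printing Implicit Defensive.
Import GRing.Theory Num.Theory.
Local Open Scope ring_scope.
Local Notation "1" := (@mone _) : monom_scope.
Local Notation "x * y" := (mmul x y) : monom_scope.

Section Gen.
Variables (R : realType) (I : choiceType).
Local Notation P := (Pol R I).

Definition Lm (S : lmodType (complex R)) (F : {cmonom I} -> S) (g : P) : S :=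
  \sum_(mu <- msupp g) g@_mu *: F mu.

Lemma LmEw (S : lmodType (complex R)) (F : {cmonom I} -> S) (g : P) (d : {fset {cmonom I}}) :
  (msupp g `<=` d)%fset -> Lm F g = \sum_(mu <- d) g@_mu *: F mu.
Proof.
move=> le; rewrite /Lm (big_fset_incl _ le) // => mu _ /mcoeff_outdom ->.
by rewrite scale0r.
Qed.

Lemma LmD S F g1 g2 : @Lm S F (g1 + g2) = Lm F g1 + Lm F g2.
Proof.
set d := (msupp g1 `|` msupp g2)%fset.
rewrite (@LmEw _ _ _ d) ?msuppD_le // (@LmEw _ _ g1 d) ?fsubsetUl //.
rewrite (@LmEw _ _ g2 d) ?fsubsetUr // -big_split /=.
by apply: eq_bigr => mu _; rewrite mcoeffD scalerDl.
Qed.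

Lemma LmZ S F c g : @Lm S F (c *: g) = c *: Lm F g.
Proof.
rewrite (@LmEw _ _ _ (msupp g)) ?msuppZ_le // /Lm scaler_sumr.
by apply: eq_bigr => mu _; rewrite mcoeffZ scalerA.
Qed.

Lemma Lm0 S F : @Lm S F 0 = 0.
Proof. by rewrite /Lm msupp0 big_seq_fset0. Qed.

Lemma LmN S F g : @Lm S F (- g) = - Lm F g.
Proof. by rewrite -(scaleN1r g) LmZ scaleN1r. Qed.

Lemma LmB S F g1 g2 : @Lm S F (g1 - g2) = Lm F g1 - Lm F g2.
Proof. by rewrite LmD LmN. Qed.

Lemma Lm_sum S F (T : Type) (r : seq T) (Q : pred T) (G : T -> P) :
  @Lm S F (\sum_(t <- r | Q t) G t) = \sum_(t <- r | Q t) Lm F (G t).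
Proof.
apply: (big_rec2 (fun a b => Lm F a = b)); first exact: Lm0.
by move=> t y1 y2 _ <-; rewrite LmD.
Qed.

Lemma LmU S F mu : @Lm S F << mu >> = F mu.
Proof. by rewrite /Lm msuppU1 big_seq_fset1 mcoeffUU scale1r. Qed.

Lemma malgUZ c (k : {cmonom I}) : << c *g k >> = c *: << k >> :> P.
Proof.
apply/malgP => k'; rewrite mcoeffZ [LHS]mcoeffU [in RHS]mcoeffU1.
by case: eqP => _; rewrite ?mulr1 ?mulr0.
Qed.

Lemma Lm_id (g : P) : Lm (fun mu => << mu >>) g = g.
Proof.
rewrite [in RHS](monalgE g) /Lm; apply: eq_bigr => mu _; by rewrite [RHS]malgUZ.
Qed.

Lemma LmF (S : lmodType (complex R)) (F G : {cmonom I} -> S) g :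
  (forall mu, mu \in msupp g -> F mu = G mu) -> Lm F g = Lm G g.
Proof. by move=> h; rewrite /Lm big_seq_cond [RHS]big_seq_cond; apply: eq_bigr => mu /andP[/h -> _]. Qed.

Lemma LmFB (S : lmodType (complex R)) (F G : {cmonom I} -> S) g :
  Lm F g - Lm G g = Lm (fun mu => F mu - G mu) g.
Proof. by rewrite /Lm -sumrB; apply: eq_bigr => mu _; rewrite scalerBr. Qed.

Lemma malgUU (mu nu : {cmonom I}) : << mu >> * << nu >> = << (mu * nu)%M >> :> P.
Proof. by rewrite malgM_def fgmulUU mulr1. Qed.

Lemma mulLm (u v : P) : u * v = Lm (fun mu => << mu >> * v) u.
Proof.
rewrite -{1}(Lm_id u) /Lm mulr_suml; apply: eq_bigr => mu _.
by rewrite scalerAl.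
Qed.

Lemma LmulU (nu : {cmonom I}) (v : P) : << nu >> * v = Lm (fun mu => << (nu * mu)%M >>) v.
Proof.
rewrite -{1}(Lm_id v) /Lm mulr_sumr; apply: eq_bigr => mu _.
by rewrite -scalerAr malgUU.
Qed.

Lemma cm_split (mu : {cmonom I}) x : x \in finsupp mu ->
  mu = (ucm x * divcm mu (ucm x))%M.
Proof.
move=> hx; apply/eqP/cmP => y; rewrite cmM ucmE divcmE ucmE.
have hx0 : mu x != 0%N by rewrite cmE_neq0.
case: (eqVneq x y) => [<-|_] /=; last by rewrite subn0.
by move: hx0; case: (mu x) => [|k] //= _; rewrite add1n subSS subn0.
Qed.

Definition ew (w : I -> nat) (mu : {cmonom I}) : nat :=
  (\sum_(x <- finsupp mu) mu x * w x)%N.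

Lemma ewEw w (mu : {cmonom I}) (d : {fset I}) : (finsupp mu `<=` d)%fset ->
  ew w mu = (\sum_(x <- d) mu x * w x)%N.
Proof.
move=> le; rewrite /ew (big_fset_incl _ le) //.
by move=> i _; rewrite -cmE_neq0 negbK => /eqP ->.
Qed.

Lemma ew1 w : ew w 1%M = 0%N.
Proof. by rewrite /ew mdom1 big_seq_fset0. Qed.

Lemma ewU w x : ew w (ucm x) = w x.
Proof. by rewrite /ew mdomU big_seq_fset1 cmUU mul1n. Qed.

Lemma ewM w (mu nu : {cmonom I}) : ew w (mu * nu)%M = (ew w mu + ew w nu)%N.
Proof.
rewrite (@ewEw w mu _ (fsubsetUl (finsupp mu) (finsupp nu))) (@ewEw w nu _ (fsubsetUr (finsupp mu) (finsupp nu))).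
rewrite /ew mdomD.
by rewrite -big_split /=; apply/eq_bigr=> /= i _; rewrite cmM mulnDl.
Qed.

Lemma ew_eq0 w (mu : {cmonom I}) : ew w mu = 0%N -> forall x, (mu x * w x = 0)%N.
Proof.
move=> h x; case: (boolP (x \in finsupp mu)) => hx; last first.
  by move: hx; rewrite -cmE_eq0 => /eqP ->.
by move: h; rewrite /ew (big_fsetD1 x) //= => /eqP; rewrite addn_eq0 => /andP[/eqP].
Qed.

Lemma ew_gt0 w (mu : {cmonom I}) : (0 < ew w mu)%N -> exists2 x, x \in finsupp mu & (0 < w x)%N.
Proof.
move=> h; case: (boolP (has (fun x => 0 < w x)%N (finsupp mu))) => [/hasP[x hx hw]|/hasPn hn]; first by exists x.
move: h; rewrite /ew big_seq big1 // => x /hn; rewrite -leqNgt leqn0 => /eqP ->; by rewrite muln0.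
Qed.

Definition E (w : I -> nat) (s : int) (g : P) : Prop :=
  forall mu, mu \in msupp g -> s <= (ew w mu)%:Z.

Lemma E0 w s : E w s 0.
Proof. by move=> mu; rewrite msupp0. Qed.

Lemma ED w s g1 g2 : E w s g1 -> E w s g2 -> E w s (g1 + g2).
Proof.
move=> h1 h2 mu /(fsubsetP (msuppD_le _ _)); rewrite in_fsetU => /orP[/h1|/h2] //.
Qed.

Lemma EZ w s c g : E w s g -> E w s (c *: g).
Proof. by move=> h mu /(fsubsetP (msuppZ_le _ _)) /h. Qed.

Lemma EN w s g : E w s g -> E w s (- g).
Proof. by move=> h mu; rewrite msuppN => /h. Qed.

Lemma EB w s g1 g2 : E w s g1 -> E w s g2 -> E w s (g1 - g2).
Proof. by move=> h1 h2; apply: ED => //; apply: EN. Qed.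

Lemma Esum w s (T : Type) (r : seq T) (Q : pred T) (G : T -> P) :
  (forall t, Q t -> E w s (G t)) -> E w s (\sum_(t <- r | Q t) G t).
Proof.
move=> h; apply: (big_ind (E w s)); [exact: E0| exact: ED|exact: h].
Qed.

Lemma EU w s (mu : {cmonom I}) : s <= (ew w mu)%:Z -> E w s << mu >>.
Proof. by move=> h nu; rewrite msuppU1 in_fset1 => /eqP ->. Qed.

Lemma E_le w s s' g : E w s g -> s' <= s -> E w s' g.
Proof. by move=> h2 h1 mu /h2 h; lia. Qed.

Lemma E_ge0 w g : E w 0 g.
Proof. by move=> mu _. Qed.

Lemma E_Lm w s F (g : P) : (forall mu, mu \in msupp g -> E w s (F mu)) -> E w s (Lm F g).
Proof.
move=> h; rewrite /Lm big_seq; apply: Esum => mu /h; exact: EZ.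
Qed.

Lemma EM w s (nu : {cmonom I}) (g : P) : E w s g -> E w (s + (ew w nu)%:Z) (<< nu >> * g).
Proof.
move=> h; rewrite LmulU; apply: E_Lm => mu /h hs; apply: EU.
by rewrite ewM PoszD addrC lerD2l.
Qed.
Lemma pderivLm x (g : P) :
  pderiv x g = Lm (fun mu => (mu x)%:R *: << divcm mu (ucm x) >>) g.
Proof. by rewrite /pderiv /Lm; apply: eq_bigr => mu _; rewrite scalerA. Qed.

Lemma pderivU x (mu : {cmonom I}) : pderiv x << mu >> = (mu x)%:R *: << divcm mu (ucm x) >> :> P.
Proof. by rewrite pderivLm LmU. Qed.

Lemma E_pderiv w s x (g : P) : E w s g -> E w (s - (w x)%:Z) (pderiv x g).
Proof.
move=> h; rewrite pderivLm; apply: E_Lm => mu /h hs.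
case: (boolP (x \in finsupp mu)) => hx; last first.
  by move: hx; rewrite -cmE_eq0 => /eqP ->; rewrite scale0r; exact: E0.
apply: EZ; apply: EU; move: hs; rewrite {1}(cm_split hx) ewM ewU PoszD.
by rewrite lerBlDl addrC.
Qed.
End Gen.
Section Heis.
Variables (R : realType) (n : nat).
Local Notation M := (M1 R n).
Definition lvl (x : Hvar n) : nat := x.2.
Local Notation e := (ew lvl).
Local Notation EE := (@E R (Hvar n) lvl).

Lemma lvl_pair (a : hidx n) (p : nat) : lvl (a, p) = p.
Proof. by []. Qed.

Ltac ifs_lia := case: ifP => [?|/negbT ?]; case: ifP => [?|/negbT ?]; lia.

Lemma amode_neg (a : hidx n) (p i : nat) (y : M) :
  amode a (- ((p.+1 + i)%N%:Z)) y = pvar R (a, (p + i)%N) * y.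
Proof. by rewrite addSn. Qed.

Lemma E_amode_pos s a (i : nat) (v : M) : EE s v -> EE (s + 1 - i%:Z) (amode a i%:Z v).
Proof.
case: i => [|j] h /=; first exact: E0.
apply: EZ; apply: (E_le (E_pderiv (x := (a, j)) h)); rewrite /lvl /=.
lia.
Qed.

Lemma E_amode_m s (a : hidx n) (i : nat) (v : M) : EE s v ->
  EE (s + 1 - i%:Z) (match i with 0%N => 0 | p.+1 => p.+1%:R *: pderiv (a, p) v end).
Proof. exact: (@E_amode_pos s a i v). Qed.

Lemma supp_head (mu : {cmonom (Hvar n)}) x tl : (finsupp mu : seq _) = x :: tl -> x \in finsupp mu.
Proof. by move=> Hs; have : x \in (finsupp mu : seq _) by rewrite Hs mem_head. Qed.

Lemma ymonoA f : forall mu (m : int) (v : M) s, mdeg mu = f -> EE s v ->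
  EE ((e mu)%:Z + s - m - 1 + (if 0 <= m then 2 else 0)) (ymono f mu m v).
Proof.
elim: f => [|f IH] mu m v s hdeg hv.
  rewrite /= (mdeg_eq0I hdeg) ew1; case: eqP => [->|_]; last exact: E0.
  by apply: (E_le hv); rewrite /=; lia.
rewrite /=; case Hs: (finsupp mu : seq _) => [|x tl].
  by move: hdeg; rewrite mdegE Hs big_nil.
have hx := supp_head Hs.
have hmu := cm_split hx.
set w := divcm mu (ucm x) in hmu *.
have hdw : mdeg w = f by move: hdeg; rewrite {1}hmu mdegM mdegU add1n => -[].
have hew : e mu = (x.2 + e w)%N by rewrite {1}hmu ewM ewU.
apply: Esum => i _; apply: EZ; apply: EB.
  rewrite ?amode_neg /pvar.
  apply: (E_le (EM (IH w (m + i%:Z) v s hdw hv))).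
  rewrite ewU lvl_pair hew.
  move: (x.2) => p; ifs_lia.
apply: EZ.
apply: (E_le (IH w _ _ (s + 1 - i%:Z) hdw (E_amode_pos hv))).
rewrite hew.
move: (x.2) => p; ifs_lia.
Qed.
Lemma ymonoB f : forall mu (v : M), mdeg mu = f -> e mu = 0%N ->
  EE 1 (ymono f mu (-1) v - << mu >> * v).
Proof.
elim: f => [|f IH] mu v hdeg he0.
  rewrite /= (mdeg_eq0I hdeg) ?eqxx mpolyC1E mul1r subrr; exact: E0.
rewrite /=; case Hs: (finsupp mu : seq _) => [|x tl].
  by move: hdeg; rewrite mdegE Hs big_nil.
have hx := supp_head Hs.
have hmu := cm_split hx.
set w := divcm mu (ucm x) in hmu *.
have hdw : mdeg w = f by move: hdeg; rewrite {1}hmu mdegM mdegU add1n => -[].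
have hew : e mu = (x.2 + e w)%N by rewrite {1}hmu ewM ewU.
have hx2 : x.2 = 0%N by move: hew; rewrite he0; lia.
have hw0 : e w = 0%N by move: hew; rewrite he0; lia.
rewrite big_ord_recl addrAC; apply: ED; last first.
  apply: Esum => i _; apply: EZ; apply: EB.
    rewrite ?amode_neg /pvar.
    apply: (E_le (EM (@E_ge0 _ _ lvl _))).
    rewrite ewU lvl_pair lift0; lia.
  apply: EZ.
  apply: (E_le (ymonoA hdw (@E_amode_m 0 x.1 (lift ord0 i) v (@E_ge0 _ _ lvl v)))).
  rewrite hw0 lift0 /=. lia.
rewrite bin0 scale1r addrAC; apply: EB; last first.
  apply: EZ.
  apply: (E_le (ymonoA hdw (@E_amode_m 0 x.1 0 v (@E_ge0 _ _ lvl v)))).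
  rewrite hw0 /=. lia.
rewrite ?amode_neg.
have -> : pvar R (x.1, (x.2 + 0)%N) = << ucm x >> by rewrite addn0 -surjective_pairing.
have -> : (<< mu >> : M) = << ucm x >> * << w >> by rewrite malgUU -hmu.
rewrite -mulrA -mulrBr.
apply: (E_le (EM (IH w v hdw hw0))).
rewrite ewU; lia.
Qed.
Lemma Ymode_Lm (u : M) m v : Ymode u m v = Lm (fun mu => ymono (mdeg mu) mu m v) u.
Proof. by []. Qed.

Lemma Ymode_m1 (u v : M) : EE 1 (Ymode u (-1) v - u * v).
Proof.
rewrite Ymode_Lm mulLm LmFB; apply: E_Lm => mu _.
case: (eqVneq (e mu) 0%N) => he; first exact: ymonoB.
have he' : (0 < e mu)%N by rewrite lt0n.
apply: EB.
  apply: (E_le (ymonoA (erefl _) (@E_ge0 _ _ lvl v))); rewrite /=; lia.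
apply: (E_le (EM (@E_ge0 _ _ lvl v))); lia.
Qed.

Lemma Ymode_0 (u v : M) : EE 1 (Ymode u 0 v).
Proof.
rewrite Ymode_Lm; apply: E_Lm => mu _.
apply: (E_le (ymonoA (erefl _) (@E_ge0 _ _ lvl v))); rewrite /=; lia.
Qed.

Lemma Ymode_m2 (u v : M) : EE 1 (Ymode u (-2) v).
Proof.
rewrite Ymode_Lm; apply: E_Lm => mu _.
apply: (E_le (ymonoA (erefl _) (@E_ge0 _ _ lvl v))); rewrite /=; lia.
Qed.

Lemma YmodeZ c (u : M) m v : Ymode (c *: u) m v = c *: Ymode u m v.
Proof. by rewrite !Ymode_Lm LmZ. Qed.

Lemma seq_fset1 (T : choiceType) (y : T) : ([fset y]%fset : seq T) = [:: y].
Proof.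
apply: perm_small_eq => //; apply: uniq_perm; [exact: fset_uniq | by [] | ].
by move=> z; rewrite [in RHS]inE -[LHS]/(z \in [fset y]%fset) in_fset1.
Qed.

End Heis.
Section Heis3.
Variables (R : realType) (n : nat).
Local Notation M := (M1 R n).
Local Notation e := (ew (@lvl n)).
Local Notation EE := (@E R (Hvar n) (@lvl n)).
Lemma ymono1 (a : hidx n) (p : nat) (v : M) :
  ymono 1 (ucm (a, p)) (-2) v = (p.+1)%:R *: (pvar R (a, p.+1) * v).
Proof.
rewrite /= mdomU seq_fset1 /=.
have hne : forall j : nat, (-2 - (p.+1)%:Z - j%:Z == -1) = false.
  by move=> j; apply/negbTE/eqP; lia.
have h1 : (1 < (mwt (ucm (a, p)) + wtbound v + (0 + 1).+1).+1)%N by rewrite !addnS.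
rewrite (bigD1 (Ordinal h1)) //= big1 => [|i hi].
  by rewrite addnK bin1 addn1 scaler0 subr0 addr0.
have hi' : (nat_of_ord i != 1%N) by apply: contraNneq hi => h; apply/eqP; apply: val_inj.
rewrite hne (_ : (-2 + (nat_of_ord i)%:Z == -1) = false); last by apply/negbTE/eqP; lia.
by rewrite mulr0 scaler0 subr0 scaler0.
Qed.

Lemma inC2_0 : inC2 (0 : M).
Proof. by exists [::]; rewrite big_nil. Qed.

Lemma inC2_D (x y : M) : inC2 x -> inC2 y -> inC2 (x + y).
Proof. by move=> [s1 ->] [s2 ->]; exists (s1 ++ s2); rewrite big_cat. Qed.

Lemma inC2_Z c (x : M) : inC2 x -> inC2 (c *: x).
Proof.
move=> [s ->]; exists [seq (c *: p.1, p.2) | p <- s].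
rewrite big_map scaler_sumr; apply: eq_bigr => p _; by rewrite YmodeZ.
Qed.

Lemma inC2_sum (T : Type) (r : seq T) (Q : pred T) (G : T -> M) :
  (forall t, Q t -> inC2 (G t)) -> inC2 (\sum_(t <- r | Q t) G t).
Proof. move=> h; apply: (big_ind (@inC2 R n)); [exact: inC2_0|exact: inC2_D|exact: h]. Qed.

Lemma inC2_Lm (I : choiceType) (F : {cmonom I} -> M) (g : Pol R I) :
  (forall mu, mu \in msupp g -> inC2 (F mu)) -> inC2 (Lm F g).
Proof. by move=> h; rewrite /Lm big_seq; apply: inC2_sum => mu /h; apply: inC2_Z. Qed.

Lemma inC2_U (mu : {cmonom (Hvar n)}) : (0 < e mu)%N -> inC2 (<< mu >> : M).
Proof.
case/ew_gt0 => -[a q] hx; rewrite lvl_pair; case: q hx => [|p] hx // _.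
have hmu := cm_split hx.
have -> : (<< mu >> : M) = (p.+1%:R)^-1 *: Ymode << ucm (a, p) >> (-2) << divcm mu (ucm (a, p.+1)) >>.
  rewrite Ymode_Lm LmU mdegU ymono1 scalerA mulVf ?scale1r ?pnatr_eq0 //.
  by rewrite /pvar malgUU -hmu.
by apply: inC2_Z; exists [:: (<< ucm (a, p) >>, << divcm mu (ucm (a, p.+1)) >>)]; rewrite big_seq1.
Qed.

Lemma inC2_m2 (u v : M) : inC2 (Ymode u (-2) v).
Proof. by exists [:: (u, v)]; rewrite big_seq1. Qed.

Definition proj (mu : {cmonom (Hvar n)}) : {cmonom (hidx n)} :=
  [cmonom mu (b, 0%N) | b in [fset x.1 | x in finsupp mu]%fset]%M.

Lemma projE mu b : proj mu b = mu (b, 0%N).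
Proof.
rewrite /proj cmE fsfun_fun; case: ifP => // hb; apply/esym/eqP; rewrite cmE_eq0.
apply: contraFN hb => h; apply/imfsetP; by exists (b, 0%N).
Qed.

Definition lift (nu : {cmonom (hidx n)}) : {cmonom (Hvar n)} :=
  [cmonom (if x.2 == 0%N then nu x.1 else 0%N) | x in [fset (b, 0%N) | b in finsupp nu]%fset]%M.

Lemma liftE nu x : lift nu x = if x.2 == 0%N then nu x.1 else 0%N.
Proof.
rewrite /lift cmE fsfun_fun; case: ifP => // hx.
case: x hx => b q /= hx; case: eqP => // hq; subst q.
apply/esym/eqP; rewrite cmE_eq0; apply: contraFN hx => h; apply/imfsetP; by exists b.
Qed.
Lemma proj1 : proj 1%M = 1%M.
Proof. by apply/eqP/cmP => b; rewrite projE !cm1. Qed.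

Lemma projM mu nu : proj (mu * nu)%M = (proj mu * proj nu)%M.
Proof. by apply/eqP/cmP => b; rewrite projE !cmM !projE. Qed.

Lemma projU (a : hidx n) : proj (ucm (a, 0%N)) = ucm a.
Proof. by apply/eqP/cmP => b; rewrite projE !ucmE xpair_eqE eqxx andbT. Qed.

Lemma proj_div (a : hidx n) mu : proj (divcm mu (ucm (a, 0%N))) = divcm (proj mu) (ucm a).
Proof. by apply/eqP/cmP => b; rewrite projE !divcmE projE !ucmE xpair_eqE eqxx andbT. Qed.

Lemma proj_lift nu : proj (lift nu) = nu.
Proof. by apply/eqP/cmP => b; rewrite projE liftE. Qed.

Lemma lift_proj mu : e mu = 0%N -> lift (proj mu) = mu.
Proof.
move=> he; apply/eqP/cmP => -[b q]; rewrite liftE /=; case: eqP => [->|hq].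
  by rewrite projE.
have := ew_eq0 he (b, q); rewrite lvl_pair => /eqP; rewrite muln_eq0 => /orP[/eqP -> //|/eqP hq0].
by case: hq.
Qed.

Lemma e_lift nu : e (lift nu) = 0%N.
Proof.
by rewrite /ew big1_seq // => x _; rewrite liftE /lvl; case: eqP => [->|_]; rewrite ?muln0.
Qed.

Definition hh (mu : {cmonom (Hvar n)}) : Apol R n := if e mu == 0%N then << proj mu >> else 0.

Lemma hhM : {morph hh : x y / (x * y)%M >-> (x * y)%R}.
Proof.
move=> mu nu; rewrite /hh ewM addn_eq0.
case: (e mu == 0%N); case: (e nu == 0%N) => /=; rewrite ?mul0r ?mulr0 //.
by rewrite projM malgUU.
Qed.

Lemma hh1 : hh 1%M = 1.
Proof. by rewrite /hh ew1 eqxx proj1; exact: mpolyC1E. Qed.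

HB.instance Definition _ := isMultiplicative.Build {cmonom (Hvar n)} (Apol R n) hh (hhM, hh1).

Definition Phi (g : M) : Apol R n := mmap (@mkmalgU {cmonom (hidx n)} (complex R) 1%M) hh g.

Lemma PhiE g : Phi g = Lm hh g.
Proof. by rewrite /Phi mmapE /Lm; apply: eq_bigr => mu _; rewrite mul_malgC. Qed.

Lemma PhiM u v : Phi (u * v) = Phi u * Phi v.
Proof. by rewrite /Phi rmorphM. Qed.
Lemma Lm_comp (J K : choiceType) (S : lmodType (complex R)) (G : {cmonom K} -> S)
  (F : {cmonom J} -> Pol R K) (g : Pol R J) :
  Lm G (Lm F g) = Lm (fun mu => Lm G (F mu)) g.
Proof. by rewrite [Lm F g]/Lm Lm_sum; apply: eq_bigr => mu _; rewrite LmZ. Qed.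

Lemma PhiB u v : Phi (u - v) = Phi u - Phi v.
Proof. by rewrite !PhiE LmB. Qed.

Lemma PhiD u v : Phi (u + v) = Phi u + Phi v.
Proof. by rewrite !PhiE LmD. Qed.

Lemma Phi_sum (T : Type) (r : seq T) (Q : pred T) (G : T -> M) :
  Phi (\sum_(t <- r | Q t) G t) = \sum_(t <- r | Q t) Phi (G t).
Proof. by rewrite PhiE Lm_sum; apply: eq_bigr => t _; rewrite PhiE. Qed.

Lemma PhiU mu : Phi << mu >> = hh mu.
Proof. by rewrite PhiE LmU. Qed.

Lemma Phi_E1 g : EE 1 g -> Phi g = 0.
Proof.
move=> h; rewrite PhiE /Lm big_seq big1 // => mu /h hmu.
rewrite /hh (_ : (e mu == 0%N) = false) ?scaler0 //.
by apply/negbTE; apply: contraTneq hmu => ->.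
Qed.

Lemma Phi_pvar0 (a : hidx n) : Phi (pvar R (a, 0%N)) = pvar R a.
Proof. by rewrite /pvar PhiU /hh ewU lvl_pair eqxx projU. Qed.

Lemma Phi_pderiv (a : hidx n) (g : M) : Phi (pderiv (a, 0%N) g) = pderiv a (Phi g).
Proof.
rewrite !PhiE !pderivLm !Lm_comp.
apply: LmF => mu _; rewrite LmZ LmU -pderivLm.
have hpd0 : pderiv a (0 : Apol R n) = 0 by rewrite pderivLm Lm0.
case: (boolP ((a, 0%N) \in finsupp mu)) => hx; last first.
  move: hx; rewrite -cmE_eq0 => /eqP h0; rewrite h0 scale0r /hh.
  case: eqP => _; last by rewrite hpd0.
  by rewrite pderivU projE h0 scale0r.
have hmu := cm_split hx.
have he : e (divcm mu (ucm (a, 0%N))) = e mu by rewrite {2}hmu ewM ewU lvl_pair.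
rewrite /hh he; case: eqP => _; last by rewrite scaler0 hpd0.
by rewrite pderivU projE proj_div.
Qed.

Definition rho (p : Apol R n) : M := Lm (fun nu => (<< lift nu >> : M)) p.

Lemma Phi_rho p : Phi (rho p) = p.
Proof.
rewrite PhiE /rho Lm_comp -[RHS]Lm_id; apply: LmF => nu _.
by rewrite /Lm msuppU1 big_seq_fset1 mcoeffUU scale1r /hh e_lift eqxx proj_lift.
Qed.

Lemma rhoPhi_C2 (c : M) : inC2 (c - rho (Phi c)).
Proof.
rewrite PhiE /rho Lm_comp -{1}(Lm_id c) LmFB.
apply: inC2_Lm => mu hmu.
rewrite /hh; case: eqP => he.
  by rewrite LmU lift_proj // subrr; exact: inC2_0.
rewrite Lm0 subr0; apply: inC2_U; rewrite lt0n; exact/eqP.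
Qed.

Lemma amode_1 (a : hidx n) (y : M) : amode a 1 y = pderiv (a,0%N) y.
Proof. by rewrite -[RHS]scale1r; reflexivity. Qed.

Lemma amode_m1 (a : hidx n) (y : M) : amode a (-1) y = pvar R (a,0%N) * y.
Proof. reflexivity. Qed.

End Heis3.
Opaque pderiv pvar Ymode.
Section Heis4.
Variables (R : realType) (n : nat).
Local Notation M := (M1 R n).
Local Notation e := (ew (@lvl n)).
Local Notation EE := (@E R (Hvar n) (@lvl n)).
Lemma Phi_fmap (i : 'I_n) (g : M) :
  Phi (fmap i g) = pderiv (false, i) (Phi g) - pvar R (true, i) * Phi g.
Proof.
have -> : fmap i g = pderiv ((false, i), 0%N) g - pvar R ((true, i), 0%N) * g.
  by rewrite /fmap amode_1 amode_m1.
have e1 := Phi_pderiv (false,i) g.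
have e2 : Phi (pvar R ((true,i),0%N) * g) = pvar R (true,i) * Phi g.
  rewrite (PhiM (pvar R ((true, i), 0%N)) g) (@Phi_pvar0 R n (true, i)).
  reflexivity.
apply: (etrans (PhiB _ _)).
congr (_ - _); [exact: e1 | exact: e2].
Qed.

Lemma Phi_Ym1 (u y : M) : Phi (Ymode u (-1) y) = Phi u * Phi y.
Proof. by apply/eqP; rewrite -subr_eq0 -PhiM -PhiB (Phi_E1 (@Ymode_m1 R n u y)). Qed.

Lemma Phi_Y0 (u y : M) : Phi (Ymode u 0 y) = 0.
Proof. exact: Phi_E1 (@Ymode_0 R n u y). Qed.

Lemma Phi_Ym2 (u y : M) : Phi (Ymode u (-2) y) = 0.
Proof. exact: Phi_E1 (@Ymode_m2 R n u y). Qed.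

Lemma Phi_iterY (v : M) ns :
  Phi (iterY v ns) = if has id ns then 0 else Phi v ^+ (size ns).+1.
Proof.
elim: ns => [|b ns IH] /=; first by rewrite expr1.
case: b => /=; first exact: Phi_Y0.
rewrite Phi_Ym1 IH; case: ifP => _.
  rewrite mulr0; reflexivity.
rewrite [RHS]exprS; reflexivity.
Qed.

Lemma Msub_Phi k (v : M) : Msub k v <-> Usub k (Phi v).
Proof.
split.
  move=> [a [c [[s hs] ->]]]; exists (fun i => Phi (a i)).
  rewrite PhiD Phi_sum (_ : Phi c = 0) ?addr0.
    by apply: eq_bigr => i _; rewrite Phi_fmap.
  by rewrite hs Phi_sum big1 // => p _; rewrite Phi_Ym2.
move=> [g hg].
set c := v - \sum_(i < n | (i < k)%N) fmap i (rho (g i)).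
exists (fun i => rho (g i)), c; split; last by rewrite /c addrC subrK.
have hc : Phi c = 0.
  rewrite /c PhiB Phi_sum hg; apply/eqP; rewrite subr_eq0; apply/eqP.
  by apply: eq_bigr => i _; rewrite Phi_fmap Phi_rho.
by have := rhoPhi_C2 c; rewrite hc /rho Lm0 subr0.
Qed.
End Heis4.
Lemma sel01_t : sel01 true = 0. Proof. by []. Qed.
Lemma sel01_f : sel01 false = -1. Proof. by []. Qed.

Theorem mainTheorem14 (R : realType) (n k : nat) :
  (1 <= n)%N -> (1 <= k <= n)%N ->
  (MZ01_subspace (@Msub R n k) <-> MathieuZhao (@Usub R n k)).
Proof.
move=> _ _.
have U0 : Usub k (0 : Apol R n).
  exists (fun _ => 0); apply/esym; apply: big1 => i _.
  by rewrite pderivLm Lm0 mulr0 subr0.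
have HM : forall v : M1 R n, Msub k v <-> Usub k (Phi v) := fun v => Msub_Phi k v.
have Hr : forall v : M1 R n, r01 (Msub k) v <-> Defs.rad (Usub k) (Phi v).
  move=> v; split.
    case=> m hm; exists m.+1; split => // t ht.
    have ht' : (m <= t.-1)%N by lia.
    have ht0 : (0 < t)%N by lia.
    have := hm (nseq t.-1 false); rewrite size_nseq => /(_ ht').
    by move/HM; rewrite Phi_iterY has_nseq andbF size_nseq (prednK ht0).
  case=> m [hm1 hm]; exists m => ns hns; apply/HM; rewrite Phi_iterY.
  case: ifP => _; first exact: U0.
  apply: hm; exact: leq_trans hns (leqnSn _).
have Hs : forall v : M1 R n, sr01 (Msub k) v <-> Defs.srad (Usub k) (Phi v).
  move=> v; split.
    case=> hl _ b c; have [m hm] := hl (rho (b * c)).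
    exists m.+1; split => // t ht.
    have ht' : (m <= t.-1)%N by lia.
    have ht0 : (0 < t)%N by lia.
    have := hm (nseq t.-1 false) false; rewrite size_nseq.
    move=> /(_ ht') /HM.
    rewrite sel01_f Phi_Ym1 Phi_rho Phi_iterY has_nseq andbF size_nseq (prednK ht0).
    by move=> h; apply: (eq_ind _ (Usub k) h); exact: mulrAC.
  move=> hs; split.
    move=> b; have [m [_ hm]] := hs (Phi b) 1.
    exists m => ns s hns; apply/HM.
    case: s; first by rewrite sel01_t Phi_Y0; exact: U0.
    rewrite sel01_f Phi_Ym1 Phi_iterY; case: ifP => _.
      by apply: (eq_ind _ (Usub k) U0); exact: (esym (mulr0 _)).
    have := hm (size ns).+1 (leq_trans hns (leqnSn _)).
    by move=> h; apply: (eq_ind _ (Usub k) h); exact: mulr1.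
  move=> w; have [m [_ hm]] := hs 1 (Phi w).
  exists m => ns s hns; apply/HM.
  case: s; first by rewrite sel01_t Phi_Y0; exact: U0.
  rewrite sel01_f Phi_Ym1 Phi_iterY; case: ifP => _.
    by apply: (eq_ind _ (Usub k) U0); exact: (esym (mul0r _)).
  have := hm (size ns).+1 (leq_trans hns (leqnSn _)).
  by move=> h; apply: (eq_ind _ (Usub k) h); congr (_ * _); exact: mul1r.
split => H.
  move=> a; rewrite -(Phi_rho a); split => h.
    by apply/Hs/H/Hr.
  by apply/Hr/H/Hs.
move=> v; split => h.
  by apply/Hs/H/Hr.
by apply/Hr/H/Hs.
Qed.
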